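(* Let $n,m$ be positive integers, let $x\in\mathbb{R}^n$, $y\in\mathbb{R}^m$ and $Z=(z_{ij})\in\mathbb{R}^{n\times m}$. For $i\in[n]$, $j\in[m]$ put $P_{ij}:=(x_i,y_j,z_{ij})\in\mathbb{R}^3$, and define the convex sets \[ A_i:=\operatorname{conv}\{P_{ij}: j\in[m]\}\quad (i\in[n]),\qquad B_j:=\operatorname{conv}\{P_{ij}: i\in[n]\}\quad (j\in[m]). \] Then at least one of the following holds: (1) there is a real number $x_0$ and a line $l_x$ contained in the plane $\{(x_0,s,t): s,t\in\mathbb{R}\}$ that intersects every set $B_j$, $j\in[m]$; or (2) there is a real number $y_0$ and a line $l_y$ contained in the plane $\{(s,y_0,t): s,t\in\mathbb{R}\}$ that intersects every set $A_i$, $i\in[n]$.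
   Context: $[n]=\{1,\dots,n\}$. Each $A_i$ lies in the plane $\{x=x_i\}$, each $B_j$ lies in the plane $\{y=y_j\}$, and $P_{ij}\in A_i\cap B_j$. *)

(* Defs.v *)
From HB Require Import structures.
From mathcomp Require Import all_boot all_order all_algebra.
From mathcomp Require Import reals.
Set Implicit Arguments. Unset Strict Implicit. Unset Printing Implicit Defensive.
Import Order.TTheory GRing.Theory Num.Theory.
Local Open Scope ring_scope.

(* Points of R^3 are row vectors 'rV[R]_3; coordinates 0,1,2 are x,y,z. *)

Definition pt3 {R : realType} (a b c : R) : 'rV[R]_3 :=
  \row_(k < 3) (if val k == 0%N then a else if val k == 1%N then b else c).

Definition in_conv {R : realType} {I : finType} (f : I -> 'rV[R]_3) (p : 'rV[R]_3) :=
  exists w : I -> R, (forall i, 0 <= w i) /\ \sum_i w i = 1 /\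
                     p = \sum_i w i *: f i.

(* q lies on the line through p with direction d (d <> 0 required separately). *)
Definition on_line {R : realType} (p d q : 'rV[R]_3) := exists t : R, q = p + t *: d.

Definition Ppt {R : realType} {n m : nat} (x : 'I_n -> R) (y : 'I_m -> R)
  (Z : 'M[R]_(n, m)) (i : 'I_n) (j : 'I_m) : 'rV[R]_3 := pt3 (x i) (y j) (Z i j).

(* Main.v *)
Require Import Defs.
From HB Require Import structures.
From mathcomp Require Import all_boot all_order all_algebra.
From mathcomp Require Import reals.
Import Order.TTheory GRing.Theory Num.Theory.
Local Open Scope ring_scope.
From mathcomp Require Import ring lra.


Section Farkas.
Variable R : realFieldType.

Lemma sandwich (I : finType) (PL PU : pred I) (L U : I -> R) :
  (forall i j, PL i -> PU j -> L i <= U j) ->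
  exists t, (forall i, PL i -> L i <= t) /\ (forall j, PU j -> t <= U j).
Proof.
move=> H; case: (pickP PL) => [i0 Hi0|none].
  exists (\big[Num.max/L i0]_(i | PL i) L i); split.
    by move=> i Hi; apply: le_bigmax_cond.
  by move=> j Hj; apply: bigmax_le => [|i Hi]; apply: H.
case: (pickP PU) => [j0 Hj0|none'].
  exists (\big[Num.min/U j0]_(j | PU j) U j); split; first by move=> i; rewrite none.
  by move=> j Hj; apply: bigmin_le_cond.
by exists 0; split=> i; rewrite ?none ?none'.
Qed.

Lemma sum_ind (I : finType) (p : I) (a : R) (f : I -> R) :
  \sum_i (if i == p then a else 0) * f i = a * f p.
Proof.
rewrite (bigD1 p) //= eqxx big1 ?addr0 // => i /negbTE ->; by rewrite mul0r.
Qed.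

Lemma sum_ind' (I : finType) (p : I) (a : R) (f : I -> R) :
  \sum_i f i * (if i == p then a else 0) = f p * a.
Proof.
rewrite (bigD1 p) //= eqxx big1 ?addr0 // => i /negbTE ->; by rewrite mulr0.
Qed.

Definition feas (V I : finType) (A : I -> V -> R) (b : I -> R) :=
  exists x : V -> R, forall i, \sum_v A i v * x v <= b i.
Definition cert (V I : finType) (A : I -> V -> R) (b : I -> R) :=
  exists y : I -> R, (forall i, 0 <= y i) /\ (forall v, \sum_i y i * A i v = 0)
     /\ \sum_i y i * b i < 0.
Arguments feas {V I}.
Arguments cert {V I}.

Section Step.
Variables (I : finType) (c : I -> R).
Definition Cf (i' : I + (I * I)) (i : I) : R :=
  match i' with
  | inl i0 => if (c i0 == 0) && (i == i0) then 1 else 0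
  | inr (p, q) => if (0 < c p) && (c q < 0) then
       (if i == p then - c q else 0) + (if i == q then c p else 0) else 0
  end.

Lemma Cf_ge0 i' i : 0 <= Cf i' i.
Proof.
case: i' => [i0|[p q]] /=; first by case: ifP.
case: ifP => // /andP [hp hq].
by apply: addr_ge0; case: ifP => //; rewrite ?oppr_ge0 ltW.
Qed.

Lemma Cf_inl i0 f : \sum_i Cf (inl i0) i * f i = if c i0 == 0 then f i0 else 0.
Proof.
rewrite /=; case: (c i0 == 0) => /=; first by rewrite sum_ind mul1r.
by rewrite big1 // => i _; rewrite mul0r.
Qed.

Lemma Cf_inr p q f : \sum_i Cf (inr (p, q)) i * f i =
   if (0 < c p) && (c q < 0) then - c q * f p + c p * f q else 0.
Proof.
rewrite /=; case: ifP => _; last by rewrite big1 // => i _; rewrite mul0r.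
by rewrite -(sum_ind _ p) -(sum_ind _ q) -big_split /=; apply: eq_bigr => i _; rewrite mulrDl.
Qed.

End Step.
Arguments Cf {I}.
Arguments Cf_ge0 {I}.
Arguments Cf_inl {I}.
Arguments Cf_inr {I}.

Lemma farkas_aux (V : finType) (k : nat) : forall (S : {set V}) (I : finType)
  (A : I -> V -> R) (b : I -> R), #|S| = k ->
  (forall i v, v \notin S -> A i v = 0) -> feas A b \/ cert A b.
Proof.
elim: k => [|k IH] S I A b hS hA.
  have A0 : forall i v, A i v = 0.
    by move=> i v; apply: hA; move/eqP: hS; rewrite cards_eq0 => /eqP ->; rewrite inE.
  case: (pickP (fun i => b i < 0)) => [i0 hi0|none].
    right; exists (fun i => if i == i0 then 1 else 0); split; first by move=> i; case: ifP.
    split; first by move=> v; rewrite sum_ind A0 mulr0.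
    by rewrite sum_ind mul1r.
  left; exists (fun _ => 0) => i; rewrite big1 => [|v _]; last by rewrite mulr0.
  by rewrite leNgt none.
have [v0 Sv0] : exists v0, v0 \in S.
  by apply/set0Pn; rewrite -card_gt0 hS.
pose c i := A i v0.
pose A' i' v := \sum_i Cf c i' i * A i v.
pose b' i' := \sum_i Cf c i' i * b i.
have hS' : #|S :\ v0| = k by move: hS; rewrite (cardsD1 v0) Sv0 add1n => -[].
have hA' : forall i' v, v \notin S :\ v0 -> A' i' v = 0.
  move=> i' v; rewrite in_setD1 negb_and negbK => /orP [/eqP ->|hv].
    case: i' => [i0|[p q]]; rewrite /A' ?Cf_inl ?Cf_inr.
      by case: eqP.
    case: ifP => // /andP [hp hq]; rewrite /c; lra.
  by rewrite /A' big1 // => i _; rewrite hA // mulr0.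
case: (IH _ _ A' b' hS' hA') => [[x' hx']|[y' [hy'0 [hy'A hy'b]]]].
  pose r i := b i - \sum_v A i v * x' v.
  have eA : forall i', \sum_v A' i' v * x' v = \sum_i Cf c i' i * (\sum_v A i v * x' v).
    move=> i'; rewrite /A'; under eq_bigr do rewrite mulr_suml.
    rewrite exchange_big; apply: eq_bigr => i _; rewrite mulr_sumr.
    by apply: eq_bigr => v _; rewrite mulrA.
  have key : forall i', 0 <= \sum_i Cf c i' i * r i.
    move=> i'; rewrite /r; under eq_bigr do rewrite mulrBr.
    by rewrite sumrB subr_ge0 -eA; apply: hx'.
  have hLU : forall q p, c q < 0 -> 0 < c p -> r q / c q <= r p / c p.
    move=> q p hq hp.
    have := key (inr (p, q)); rewrite Cf_inr hp hq /=.
    set u := r q / c q; set w := r p / c p.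
    have -> : r q = u * c q by rewrite /u mulfVK // ltr0_neq0.
    have -> : r p = w * c p by rewrite /w mulfVK // lt0r_neq0.
    move=> h; have : 0 <= c p * (- c q) * (w - u) by nra. rewrite pmulr_rge0 ?subr_ge0 //; nra.
  have [t [ht1 ht2]] := @sandwich _ (fun q => c q < 0) (fun p => 0 < c p)
      (fun q => r q / c q) (fun p => r p / c p) hLU.
  left; exists (fun v => x' v + (if v == v0 then t else 0)) => i.
  under eq_bigr do rewrite mulrDr.
  rewrite big_split /= sum_ind' -/(c i) -lerBrDl.
  case: (ltrgtP (c i) 0) => hc.
  - have := ht1 i hc; set u := r i / c i => hu.
    have -> : b i - \sum_v A i v * x' v = u * c i by rewrite /u /r mulfVK // ltr0_neq0.
    nra.
  - have := ht2 i hc; set u := r i / c i => hu.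
    have -> : b i - \sum_v A i v * x' v = u * c i by rewrite /u /r mulfVK // lt0r_neq0.
    nra.
  - have := key (inl i); rewrite Cf_inl hc eqxx /r => h.
    by rewrite mul0r.
right; exists (fun i => \sum_i' y' i' * Cf c i' i); split.
  by move=> i; apply: sumr_ge0 => i' _; apply: mulr_ge0 => //; apply: Cf_ge0.
have eY : forall f : I -> R, \sum_i (\sum_i' y' i' * Cf c i' i) * f i =
    \sum_i' y' i' * \sum_i Cf c i' i * f i.
  move=> f; under eq_bigr do rewrite mulr_suml.
  rewrite exchange_big; apply: eq_bigr => i' _; rewrite mulr_sumr.
  by apply: eq_bigr => i _; rewrite mulrA.
split; first by move=> v; rewrite eY; apply: hy'A.
by rewrite eY.
Qed.

Lemma farkas (V I : finType) (A : I -> V -> R) (b : I -> R) : feas A b \/ cert A b.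
Proof. by apply: (@farkas_aux V #|[set: V]| [set: V]) => // i v; rewrite inE. Qed.


Section Mixed.
Variables (F W E : finType) (P : E -> F -> R) (Q : E -> W -> R) (r : E -> R).

Definition mA (i : (E + E) + W) (z : F + W) : R :=
  match i, z with
  | inl (inl e), inl f => P e f
  | inl (inl e), inr v => Q e v
  | inl (inr e), inl f => - P e f
  | inl (inr e), inr v => - Q e v
  | inr v', inl f => 0
  | inr v', inr v => if v == v' then -1 else 0
  end.
Definition mb (i : (E + E) + W) : R :=
  match i with inl (inl e) => r e | inl (inr e) => - r e | inr _ => 0 end.

Lemma farkas_mixed :
 (exists (th : F -> R) (w : W -> R), (forall v, 0 <= w v) /\
    forall e, \sum_f P e f * th f + \sum_v Q e v * w v = r e)
 \/ (exists u : E -> R, (forall f, \sum_e u e * P e f = 0) /\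
    (forall v, 0 <= \sum_e u e * Q e v) /\ \sum_e u e * r e < 0).
Proof.
case: (@farkas _ _ mA mb) => [[x hx]|[y [hy0 [hyA hyb]]]].
  left; exists (fun f => x (inl f)), (fun v => x (inr v)); split.
    move=> v; have := hx (inr v); rewrite big_sumType /= big1 ?add0r; last by move=> f _; rewrite mul0r.
    under eq_bigr do rewrite mulrC.
    rewrite sum_ind' /=; lra.
  move=> e; apply/eqP; rewrite eq_le; apply/andP; split.
    by have := hx (inl (inl e)); rewrite big_sumType /=.
  have := hx (inl (inr e)); rewrite big_sumType /=.
  under eq_bigr do rewrite mulNr.
  under [X in _ + X <= _]eq_bigr do rewrite mulNr.
  rewrite !sumrN; lra.
right; exists (fun e => y (inl (inl e)) - y (inl (inr e))); split.
  move=> f; rewrite -[RHS](hyA (inl f)) !big_sumType /=.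
  rewrite [X in _ = _ + X]big1 ?addr0; last by move=> v _; rewrite mulr0.
  by rewrite -big_split; apply: eq_bigr => e _ /=; ring.
split.
  move=> v; have := hyA (inr v); rewrite !big_sumType /=.
  rewrite [X in _ + X = _](eq_bigr (fun v' => y (inr v') * (if v' == v then -1 else 0))); last by move=> v' _; rewrite eq_sym.
  rewrite sum_ind' mulrN1.
  have -> : \sum_e (y (inl (inl e)) - y (inl (inr e))) * Q e v =
     \sum_e y (inl (inl e)) * Q e v + \sum_e y (inl (inr e)) * - Q e v.
    by rewrite -big_split; apply: eq_bigr => e _ /=; ring.
  move=> h; have := hy0 (inr v); lra.
apply: le_lt_trans hyb; rewrite le_eqVlt; apply/orP; left; apply/eqP.
rewrite !big_sumType /=.
rewrite [X in _ = _ + X]big1 ?addr0; last by move=> v _; rewrite mulr0.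
by rewrite -big_split; apply: eq_bigr => e _ /=; ring.
Qed.
End Mixed.

End Farkas.


Section Main.
Variable R : realFieldType.

Definition pos (t : R) := if 0 < t then t else 0.

Lemma pos_ge0 t : 0 <= pos t.
Proof. by rewrite /pos; case: ifP => // /ltW. Qed.

Lemma posB t : pos t - pos (- t) = t.
Proof. rewrite /pos; case: ifP => h; case: ifP => h'; lra. Qed.

Lemma lin3 (I : finType) (w c d : I -> R) a b g :
  \sum_i w i * (a + b * c i + g * d i) =
  a * \sum_i w i + b * \sum_i w i * c i + g * \sum_i w i * d i.
Proof. by rewrite !mulr_sumr -!big_split; apply: eq_bigr => i _ /=; ring. Qed.

Lemma half (n m : nat) (x : 'I_n -> R) (Z : 'I_n -> 'I_m -> R)
  (al be ga : 'I_m -> R) (ga' : 'I_n -> R) :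
  (forall i j, 0 <= al j + be j * x i + ga j * Z i j) -> \sum_j be j = 0 ->
  \sum_i ga' i = 0 -> \sum_i ga' i * x i = 0 ->
  0 <= (\sum_i pos (ga' i)) * \sum_j al j +
       \sum_i \sum_j (pos (ga j) * pos (- ga' i) - pos (- ga j) * pos (ga' i)) * Z i j.
Proof.
move=> hc hbe hga hgax.
pose gp i := pos (ga' i); pose gm i := pos (- ga' i).
have eG : \sum_i gm i = \sum_i gp i.
  have : \sum_i (gp i - gm i) = \sum_i ga' i by apply: eq_bigr => i _; exact: posB.
  rewrite sumrB hga; lra.
have eX : \sum_i gm i * x i = \sum_i gp i * x i.
  have : \sum_i (gp i * x i - gm i * x i) = \sum_i ga' i * x i.
    by apply: eq_bigr => i _; rewrite -mulrBl posB.
  rewrite sumrB hgax; lra.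
pose W i j := if 0 < ga j then gm i else gp i.
have H0 : 0 <= \sum_j \sum_i W i j * (al j + be j * x i + ga j * Z i j).
  apply: sumr_ge0 => j _; apply: sumr_ge0 => i _; apply: mulr_ge0 => //.
  by rewrite /W; case: ifP => _; apply: pos_ge0.
have Hj : forall j, \sum_i W i j * (al j + be j * x i + ga j * Z i j) =
   al j * \sum_i gp i + be j * \sum_i gp i * x i +
   \sum_i (pos (ga j) * gm i - pos (- ga j) * gp i) * Z i j.
  move=> j; rewrite lin3 /W /pos; case: ifP => h.
    rewrite eG eX; congr (_ + _); rewrite mulr_sumr; apply: eq_bigr => i _.
    by rewrite ifF; [ring | lra].
  congr (_ + _); rewrite mulr_sumr; apply: eq_bigr => i _.
  case: ifP => h'; first ring.
  have -> : ga j = 0 by lra.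
  ring.
move: H0; rewrite (eq_bigr _ (fun j _ => Hj j)) !big_split /= -!mulr_suml.
rewrite hbe mul0r addr0 mulrC exchange_big /=.
by [].
Qed.


Definition Cert1 (n m : nat) (x : 'I_n -> R) (y : 'I_m -> R) (Z : 'I_n -> 'I_m -> R) :=
  exists al be ga : 'I_m -> R,
    (forall i j, 0 <= al j + be j * x i + ga j * Z i j) /\ \sum_j be j = 0 /\
    \sum_j ga j = 0 /\ \sum_j ga j * y j = 0 /\ \sum_j al j < 0.

Arguments Cert1 {n m}.
Arguments half {n m x Z al be ga ga'}.

Lemma no_two (n m : nat) (x : 'I_n -> R) (y : 'I_m -> R) (Z : 'I_n -> 'I_m -> R)
  (i0 : 'I_n) : Cert1 x y Z -> Cert1 y x (fun j i => Z i j) -> False.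
Proof.
case=> al [be [ga [h1 [hbe [hga [hgy hal]]]]]].
case=> al' [be' [ga' [h2 [hbe' [hga' [hgx hal']]]]]].
have A := half h1 hbe hga' hgx.
have B := @half _ _ y (fun j i => Z i j) _ _ _ ga h2 hbe' hga hgy.
have eZ : \sum_i \sum_j (pos (ga j) * pos (- ga' i) - pos (- ga j) * pos (ga' i)) * Z i j +
  \sum_j \sum_i (pos (ga' i) * pos (- ga j) - pos (- ga' i) * pos (ga j)) * Z i j = 0.
  rewrite [X in _ + X]exchange_big -big_split big1 // => i _.
  by rewrite -big_split big1 // => j _ /=; ring.
have G0 : 0 <= \sum_j pos (ga j) by apply: sumr_ge0 => j _; apply: pos_ge0.
have G0' : 0 <= \sum_i pos (ga' i) by apply: sumr_ge0 => j _; apply: pos_ge0.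
have HG : \sum_j pos (ga j) = 0.
  have h : (\sum_j pos (ga j)) * \sum_i al' i = 0 by nra.
  by move/eqP: h; rewrite mulf_eq0 => /orP [/eqP //| /eqP h']; move: hal'; rewrite h' ltxx.
have hp : forall j, pos (ga j) = 0.
  by move=> j; apply: (psumr_eq0P _ HG) => // k _; apply: pos_ge0.
have hgz : forall j, ga j = 0.
  have hn : forall j, 0 <= - ga j.
    by move=> j; have := hp j; rewrite /pos; case: ifP => h; lra.
  have H : \sum_j - ga j = 0 by rewrite sumrN hga oppr0.
  by move=> j; have := @psumr_eq0P _ _ _ _ (fun j _ => hn j) H j isT; lra.
have : 0 <= \sum_j (al j + be j * x i0 + ga j * Z i0 j) by apply: sumr_ge0 => j _; apply: h1.
rewrite big_split big_split /= -mulr_suml hbe mul0r addr0.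
rewrite [X in _ + X]big1 ?addr0; last by move=> j _; rewrite hgz mul0r.
lra.
Qed.

End Main.


Section LP.
Variable R : realFieldType.

Lemma sum_ind2 (I : finType) (p : I) (a : I -> R) (f : I -> R) :
  \sum_i f i * (if p == i then a i else 0) = f p * a p.
Proof.
rewrite (bigD1 p) //= eqxx big1 ?addr0 // => i; rewrite eq_sym => /negbTE ->; by rewrite mulr0.
Qed.

Definition LP1 (n m : nat) (x : 'I_n -> R) (y : 'I_m -> R) (Z : 'I_n -> 'I_m -> R) :=
  exists (x0 a b : R) (w : 'I_n -> 'I_m -> R), (forall i j, 0 <= w i j) /\
   forall j, \sum_i w i j = 1 /\ \sum_i w i j * x i = x0 /\ \sum_i w i j * Z i j = a + b * y j.

Lemma sumF (g : 'I_3 -> R) :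
  \sum_f g f = g ord0 + g (Ordinal (isT : (1 < 3)%N)) + g (Ordinal (isT : (2 < 3)%N)).
Proof.
rewrite !big_ord_recl big_ord0 addr0 addrA.
by congr (_ + _ + _); apply: congr1; apply: val_inj.
Qed.

Lemma sumW (n m : nat) (g : 'I_n * 'I_m -> R) : \sum_v g v = \sum_i \sum_j g (i, j).
Proof. by rewrite pair_bigA; apply: eq_bigr => -[i j] _. Qed.

Lemma LP1_or_Cert1 n m x y Z : @LP1 n m x y Z \/ @Cert1 R n m x y Z.
Proof.
pose P (e : ('I_m + 'I_m) + 'I_m) (f : 'I_3) : R := match e with
  | inl (inl j) => 0 | inl (inr j) => if val f == 0%N then -1 else 0
  | inr j => if val f == 1%N then -1 else if val f == 2%N then - y j else 0 end.
pose Q (e : ('I_m + 'I_m) + 'I_m) (v : 'I_n * 'I_m) : R := match e with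
  | inl (inl j) => if v.2 == j then 1 else 0
  | inl (inr j) => if v.2 == j then x v.1 else 0
  | inr j => if v.2 == j then Z v.1 j else 0 end.
pose r (e : ('I_m + 'I_m) + 'I_m) : R := match e with inl (inl _) => 1 | _ => 0 end.
case: (@farkas_mixed R _ _ _ P Q r) => [[th [w [hw he]]]|[u [hP [hQ hr]]]].
  left; exists (th ord0), (th (Ordinal (isT : (1 < 3)%N))), (th (Ordinal (isT : (2 < 3)%N))).
  exists (fun i j => w (i, j)); split => [i j|j]; first exact: hw.
  have e1 := he (inl (inl j)); have e2 := he (inl (inr j)); have e3 := he (inr j).
  split.
    rewrite -[RHS]e1 sumF sumW /= !mul0r !add0r; apply: eq_bigr => i _.
    by rewrite sum_ind mul1r.
  have E2 : \sum_i \sum_j0 (if j0 == j then x i else 0) * w (i, j0) = \sum_i w (i, j) * x i.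
    by apply: eq_bigr => i _; rewrite sum_ind mulrC.
  have E3 : \sum_i \sum_j0 (if j0 == j then Z i j else 0) * w (i, j0) = \sum_i w (i, j) * Z i j.
    by apply: eq_bigr => i _; rewrite sum_ind mulrC.
  rewrite sumF sumW /= E2 in e2; rewrite sumF sumW /= E3 in e3.
  split; lra.
right; exists (fun j => u (inl (inl j))), (fun j => u (inl (inr j))), (fun j => u (inr j)).
split.
  move=> i j; have := hQ (i, j); rewrite !big_sumType /=.
  by rewrite (sum_ind2 _ _ (fun _ => 1)) (sum_ind2 _ _ (fun _ => x i)) (sum_ind2 _ _ (fun k => Z i k)) mulr1.
have Z1 : forall (g : 'I_m -> R), \sum_j g j * 0 = 0.
  by move=> g; rewrite big1 // => j _; rewrite mulr0.
split.
  apply/eqP; rewrite -oppr_eq0; apply/eqP; rewrite -[RHS](hP ord0) !big_sumType /= !Z1.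
  by rewrite add0r addr0 -sumrN; apply: eq_bigr => j _; rewrite mulrN1.
split.
  apply/eqP; rewrite -oppr_eq0; apply/eqP.
  rewrite -[RHS](hP (Ordinal (isT : (1 < 3)%N))) !big_sumType /= !Z1.
  by rewrite !add0r -sumrN; apply: eq_bigr => j _; rewrite mulrN1.
split.
  apply/eqP; rewrite -oppr_eq0; apply/eqP.
  rewrite -[RHS](hP (Ordinal (isT : (2 < 3)%N))) !big_sumType /= !Z1.
  by rewrite !add0r -sumrN; apply: eq_bigr => j _; rewrite mulrN.
by move: hr; rewrite !big_sumType /= !Z1 !addr0; under eq_bigr do rewrite mulr1.
Qed.
End LP.

Theorem theorem1 (R : realType) (n m : nat) (hn : (0 < n)%N) (hm : (0 < m)%N)
  (x : 'I_n -> R) (y : 'I_m -> R) (Z : 'M[R]_(n, m)) :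
  (exists (x0 : R) (p d : 'rV[R]_3),
      d != 0 /\
      (forall q, on_line p d q -> q ord0 0 = x0) /\
      (forall j : 'I_m, exists q, on_line p d q /\
                           in_conv (fun i : 'I_n => Ppt x y Z i j) q))
  \/
  (exists (y0 : R) (p d : 'rV[R]_3),
      d != 0 /\
      (forall q, on_line p d q -> q ord0 1 = y0) /\
      (forall i : 'I_n, exists q, on_line p d q /\
                           in_conv (fun j : 'I_m => Ppt x y Z i j) q)).
Proof.
have [H1|C1] := @LP1_or_Cert1 R n m x y (fun i j => Z i j); last first.
  have [H2|C2] := @LP1_or_Cert1 R m n y x (fun j i => Z i j); last first.
    by case: (@no_two R n m x y (fun i j => Z i j) (Ordinal hn) C1 C2).
  right; case: H2 => y0 [c [e [w [hw hw']]]].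
  exists y0, (pt3 0 y0 c), (pt3 1 0 e); split.
    apply/eqP => h; have := congr1 (fun M : 'rV[R]_3 => M ord0 ord0) h.
    by rewrite !mxE /= => /eqP; rewrite oner_eq0.
  split.
    by move=> q [t ->]; rewrite !mxE /= mulr0 addr0.
  move=> i; exists (pt3 (x i) y0 (c + e * x i)); split.
    exists (x i); apply/rowP => k; rewrite !mxE.
    by case: k => [[|[|[|k]]] hk] //=; ring.
  have [s1 [s2 s3]] := hw' i.
  exists (fun j => w j i); split; first by move=> j; apply: hw.
  split; first by [].
  apply/rowP => k; rewrite summxE !mxE.
  under eq_bigr do rewrite !mxE.
  by case: k => [[|[|[|k]]] hk] //=; rewrite -mulr_suml s1 mul1r.
left; case: H1 => x0 [a [b [w [hw hw']]]].
exists x0, (pt3 x0 0 a), (pt3 0 1 b); split.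
  apply/eqP => h; have := congr1 (fun M : 'rV[R]_3 => M ord0 (Ordinal (isT : (1 < 3)%N))) h.
  by rewrite !mxE /= => /eqP; rewrite oner_eq0.
split.
  by move=> q [t ->]; rewrite !mxE /= mulr0 addr0.
move=> j; exists (pt3 x0 (y j) (a + b * y j)); split.
  exists (y j); apply/rowP => k; rewrite !mxE.
  by case: k => [[|[|[|k]]] hk] //=; ring.
have [s1 [s2 s3]] := hw' j.
exists (fun i => w i j); split; first by move=> i; apply: hw.
split; first by [].
apply/rowP => k; rewrite summxE !mxE.
under eq_bigr do rewrite !mxE.
by case: k => [[|[|[|k]]] hk] //=; rewrite -mulr_suml s1 mul1r.
Qed.
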